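(* Let $n_r,n_q\ge 1$ and $N\ge 1$ be integers, let $M_r\in\mathbb{R}^{n_r\times n_r}$ and $M_q\in\mathbb{R}^{n_q\times n_q}$ be symmetric positive definite, let $G_r\in\mathbb{R}^{n_q\times n_r}$ be arbitrary (possibly singular), and let $\gamma_r\in\mathbb{R}^{n_r\times n_r}$, $\gamma_q\in\mathbb{R}^{n_q\times n_q}$ be stiffness coefficients (in particular, positive scalars). Let $r^{\mathrm{in}},s^{\mathrm{in}}\in\mathbb{R}^{n_r}$ and $q^{\mathrm{in}}_1,\dots,q^{\mathrm{in}}_N\in\mathbb{R}^{n_q}$. Suppose $(r(t),Q_1(t),\dots,Q_N(t))$ solves the ODE system $$\Big(M_r+\sum_{i=1}^N G_r^T M_q G_r\Big)\ddot r=-\gamma_r r+\sum_{i=1}^N G_r^T\gamma_q Q_i,\qquad \dot Q_j=-G_r\dot r\quad(j=1,\dots,N),$$ with $r(0)=r^{\mathrm{in}}$, $\dot r(0)=s^{\mathrm{in}}$, $Q_j(0)=q^{\mathrm{in}}_j$. Define $\mu^t:=\frac1N\sum_{j=1}^N\delta_{Q_j(t)}$. Then $(r(t),\mu^t)$ is a solution of the linear partially kinetic system (defined in the context) with $N_{\mathrm{real}}:=N$, initial conditions $r(0)=r^{\mathrm{in}}$, $\dot r(0)=s^{\mathrm{in}}$, and initial measure $\mu^{\mathrm{in}}=\frac1N\sum_{j=1}^N\delta_{q^{\mathrm{in}}_j}$.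
   Context: $\delta_x$ denotes the Dirac measure at $x$. $\mathcal P^1(\mathbb{R}^{n_q})$ is the set of Borel probability measures on $\mathbb{R}^{n_q}$ with finite first moment. For a measurable map $\varphi:\mathbb{R}^{n_q}\to\mathbb{R}^{n_q}$ and a measure $\mu$, the pushforward is $\varphi\#\mu(A):=\mu(\varphi^{-1}(A))$ for Borel sets $A$. Linear partially kinetic system: with $n_r,n_q,M_r,M_q,G_r,\gamma_r,\gamma_q$ as in the claim, a constant $N_{\mathrm{real}}>0$, initial data $r^{\mathrm{in}},s^{\mathrm{in}}\in\mathbb{R}^{n_r}$ and $\mu^{\mathrm{in}}\in\mathcal P^1(\mathbb{R}^{n_q})$, a solution consists of a twice differentiable $r:[0,\infty)\to\mathbb{R}^{n_r}$, a characteristic flow $Q:[0,\infty)\times\mathbb{R}^{n_q}\to\mathbb{R}^{n_q}$ differentiable in $t$, and measures $\mu^t$ such that $$\Big(M_r+N_{\mathrm{real}}\int_{\mathbb{R}^{n_q}}G_r^TM_qG_r\,d\mu^t(q)\Big)\ddot r(t)=-\gamma_r r(t)+N_{\mathrm{real}}G_r^T\gamma_q\int_{\mathbb{R}^{n_q}}q\,d\mu^t(q),$$ $$\partial_t Q(t,q^{\mathrm{in}})=-G_r\dot r(t),\quad Q(0,q^{\mathrm{in}})=q^{\mathrm{in}}\ \text{for all }q^{\mathrm{in}}\in\mathbb{R}^{n_q},\qquad \mu^t=Q(t,\cdot)\#\mu^{\mathrm{in}},$$ with $r(0)=r^{\mathrm{in}}$, $\dot r(0)=s^{\mathrm{in}}$.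 *)

(* Defs.v *)
From HB Require Import structures.
From mathcomp Require Import all_boot all_order all_algebra.
From mathcomp Require Import all_classical all_reals all_analysis.

Set Implicit Arguments.
Unset Strict Implicit.
Unset Printing Implicit Defensive.
Import Order.TTheory GRing.Theory Num.Theory.
Import numFieldNormedType.Exports.

Local Open Scope classical_set_scope.
Local Open Scope ring_scope.

(* R^n as column vectors, equipped with the Borel sigma-algebra
   (the sigma-algebra generated by the open sets of 'cV[R]_n). *)
Definition vec (R : realType) (n : nat) := g_sigma_algebraType (@open 'cV[R]_n).

(* Derivative on the time half-line [0, oo): for every t >= 0,
   the difference quotient (f (t+h) - f t)/h converges to f' t as h -> 0,
   h <> 0, t + h >= 0 (one-sided at t = 0, ordinary derivative for t > 0). *)
Definition deriv_on_nonneg (R : realType) (V : normedModType R)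
  (f f' : R -> V) : Prop :=
  forall t : R, 0 <= t ->
    (fun h : R => h^-1 *: (f (t + h) - f t)) @
      (within (fun h : R => 0 <= t + h) 0^') --> f' t.

Definition mx_integral (R : realType) (n m k : nat)
  (mu : set (vec R n) -> \bar R) (F : vec R n -> 'M[R]_(m, k)) : 'M[R]_(m, k) :=
  \matrix_(i, j) fine (\int[mu]_q (F q i j)%:E)%E.

(* Borel probability measures on R^n with finite first moment: P^1(R^n). *)
Definition is_P1 (R : realType) (n : nat) (mu : set (vec R n) -> \bar R) : Prop :=
  [/\ mu set0 = 0%E,
      (forall A, measurable A -> (0 <= mu A)%E),
      semi_sigma_additive mu,
      mu setT = 1%E &
      (\int[mu]_q (mx_norm (q : 'cV[R]_n))%:E < +oo)%E].

Definition empirical (R : realType) (n N : nat) (qs : 'I_N -> 'cV[R]_n) :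
  set (vec R n) -> \bar R :=
  fun A => ((N%:R)^-1%:E * \sum_(j < N) \d_(qs j : vec R n) A)%E.

Definition lpk_solution (R : realType) (nr nq : nat)
  (Mr : 'M[R]_nr) (Mq : 'M[R]_nq) (Gr : 'M[R]_(nq, nr))
  (gamr : 'M[R]_nr) (gamq : 'M[R]_nq) (Nreal : R)
  (rin sin : 'cV[R]_nr) (muin : set (vec R nq) -> \bar R)
  (r : R -> 'cV[R]_nr) (mu : R -> set (vec R nq) -> \bar R) : Prop :=
  is_P1 muin /\
  exists (s a : R -> 'cV[R]_nr) (Q : R -> vec R nq -> vec R nq),
    [/\ deriv_on_nonneg r s /\ deriv_on_nonneg s a,
        r 0 = rin /\ s 0 = sin,
        (forall t, 0 <= t ->
           (Mr + Nreal *: mx_integral (mu t) (fun _ => Gr^T *m Mq *m Gr)) *m a t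
           = - (gamr *m r t)
             + Nreal *: (Gr^T *m gamq *m mx_integral (mu t) (fun q => (q : 'cV[R]_nq)))),
        (forall q : vec R nq,
           deriv_on_nonneg (fun t => (Q t q : 'cV[R]_nq)) (fun t => - (Gr *m s t))
           /\ Q 0 q = q) &
        (forall t, 0 <= t -> mu t = pushforward muin (Q t))].

(* Main.v *)
Require Import Defs.
From HB Require Import structures.
From mathcomp Require Import all_boot all_order all_algebra.
From mathcomp Require Import all_classical all_reals all_analysis.
From mathcomp Require Import measurable_realfun lra.
Import Order.TTheory GRing.Theory Num.Theory.
Import numFieldNormedType.Exports.
Local Open Scope classical_set_scope.
Local Open Scope ring_scope.


Section S.
Variable R : realType.

Lemma dnbhs_within_pos (t : R) : 0 < t ->
  (0 : R)^' `=>` within (fun h : R => 0 <= t + h) (0:R)^'.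
Proof.
move=> t0 A /= HA.
have Hp : \forall h \near (0:R)^', 0 <= t + h.
  apply: filterS (dnbhs0_lt t0) => h ht.
  rewrite -lerBlDl sub0r; apply: ltW.
  by move: ht; rewrite ltr_norml => /andP[].
move: HA; rewrite /within /=. 
move=> HA; apply: filterS2 Hp HA => h hp; exact.
Qed.

Lemma is_derive_of_lim (f : R -> R) x l :
  (fun h => h^-1 *: (f (x + h) - f x)) @ (0:R)^' --> l -> is_derive x 1 f l.
Proof.
move=> H.
have E : (fun h : R => h^-1 *: ((f \o shift x) (h *: 1) - f x)) =
         (fun h => h^-1 *: (f (x + h) - f x)).
  by apply/funext => h /=; rewrite -[h%:A]/(h * 1) mulr1 (addrC h x).
have hd : derivable f x 1.
  by rewrite /derivable E; apply/cvg_ex; exists l.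
have hv : 'D_1 f x = l.
  by rewrite /derive E; apply: cvg_lim.
exact: DeriveDef hd hv.
Qed.

Lemma zero_deriv_scalar (g : R -> R) :
  (forall t, 0 <= t -> (fun h : R => h^-1 *: (g (t + h) - g t)) @
      within (fun h : R => 0 <= t + h) (0:R)^' --> (0:R)) ->
  forall t, 0 <= t -> g t = g 0.
Proof.
move=> H.
pose k := fun x : R => g (x ^+ 2).
have dk : forall x : R, is_derive x 1 k 0.
  move=> x; have [->|x0] := eqVneq x 0.
  - apply: is_derive_of_lim.
    pose q := fun h : R => h^-1 *: (g (0 + h) - g 0).
    have Hq : q @ within (fun h : R => 0 <= 0 + h) (0:R)^' --> (0:R) := H 0 (lexx 0).
    have c : (fun h : R => h ^+ 2) @ (0:R) --> (0:R).
      by have := @exprn_continuous R 2 0; rewrite /continuous_at expr0n.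
    have Hsq : (fun h : R => h ^+ 2) @ (0:R)^' `=>` within (fun h : R => 0 <= 0 + h) (0:R)^'.
      move=> A /= HA.
      have HB : nbhs (0:R) [set h | h != 0 -> 0 <= 0 + h -> A h] := HA.
      have := c _ HB.
      move=> HC.
      suff HD : nbhs (0:R) [set h | h != 0 -> A (h ^+ 2)] by exact: HD.
      have HC' : nbhs (0:R) [set h | h ^+ 2 != 0 -> 0 <= 0 + h ^+ 2 -> A (h ^+ 2)] := HC.
      apply: filterS HC' => h /= HE hn0.
      apply: HE => /=; first by rewrite sqrf_eq0.
      by rewrite add0r sqr_ge0.
    have Hc : (q \o (fun h : R => h ^+ 2)) @ (0:R)^' --> (0:R).
      exact: cvg_comp Hsq Hq.
    have Hid : (fun h : R => h) @ (0:R)^' --> (0:R).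
      move=> A HA; exact: (@nbhs_dnbhs _ (0:R) A HA).
    have HM := cvgM Hid Hc.
    rewrite mul0r in HM.
    have {}HM := HM (dnbhs_filter (0:R)).
    apply: (cvg_trans _ HM); apply: near_eq_cvg.
    apply: filterS (nbhs_dnbhs_neq (0:R)) => h hn0 /=.
    rewrite /q /k /= !add0r expr0n /=.
    rewrite -[(h ^- 2) *: _]/(h ^- 2 * _) -[h^-1 *: _]/(h^-1 * _).
    rewrite mulrA; congr (_ * _).
    by rewrite expr2 invfM mulrA mulfV // mul1r.
  - have t0 : 0 < x ^+ 2 by rewrite exprn_even_gt0 //= x0.
    have hg : is_derive (x ^+ 2) 1 g 0.
      apply: is_derive_of_lim.
      apply: cvg_trans (H _ (ltW t0)).
      apply: cvg_app; exact: dnbhs_within_pos t0.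
    have hs := derivableP (@exprn_derivable R 2 x 1).
    have := @is_derive1_comp R g (fun y : R => y ^+ 2) x 0 _ hg hs.
    by rewrite mul0r.
move=> t t0.
have := is_derive_0_is_cst (Num.sqrt t) 0 dk.
by rewrite /k sqr_sqrtr // expr0n.
Qed.

End S.

Lemma zero_deriv_mx (R : realType) m n (f : R -> 'M[R]_(m, n)) :
  deriv_on_nonneg f (fun _ => 0) -> forall t, 0 <= t -> f t = f 0.
Proof.
move=> H t t0; apply/matrixP => i j.
apply: (@zero_deriv_scalar R (fun t => f t i j)) => // s s0.
have H1 := H s s0.
have H2 := cvg_comp _ _ H1 (@coord_continuous R m n i j 0).
rewrite mxE in H2.
apply: cvg_trans H2.
apply: near_eq_cvg; apply: nearW => h /=.
by rewrite !mxE.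
Qed.



Lemma meas_cont (R : realType) n (f : 'cV[R]_n -> R) :
  continuous f -> measurable_fun [set: vec R n] (f : vec R n -> R).
Proof.
move=> cf; apply: (measurability _ (RGenOpens.measurableE R)).
move=> _ [_ [a [b ->] <-]]; rewrite setTI.
apply: sub_sigma_algebra.
by apply: (proj1 (continuousP f)) cf _ _; exact: interval_open.
Qed.

Lemma maxr_sub (R : realType) (x : R) : Num.max x 0 - Num.max (- x) 0 = x.
Proof.
rewrite !maxEle; case: (lerP x 0) => h1; case: (lerP (-x) 0) => h2; lra.
Qed.

Section emp.
Variables (R : realType) (n N : nat) (qs : 'I_N -> 'cV[R]_n).

Definition qs' (k : nat) : vec R n := odflt 0 (omap qs (insub k)).
Lemma qs'E (i : 'I_N) : qs' i = qs i.
Proof. by rewrite /qs' valK. Qed.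

Definition empm := mscale ((N%:R^-1 : R)%:nng) (msum (fun k => \d_(qs' k)) N).

Lemma empE : empirical qs = empm.
Proof.
apply/funext => A; rewrite /empirical /empm /mscale /msum /=; congr (_ * _)%E.
by apply: eq_bigr => i _; rewrite qs'E.
Qed.

Lemma int_emp_ge0 (h : vec R n -> \bar R) : measurable_fun setT h ->
  (forall x, (0 <= h x)%E) ->
  (\int[empm]_x h x = (N%:R^-1)%:E * \sum_(i < N) h (qs i))%E.
Proof.
move=> mh h0.
rewrite ge0_integral_mscale //= ge0_integral_measure_sum //.
congr (_ * _)%E; apply: eq_bigr => i _.
by rewrite integral_dirac // diracT mul1e qs'E.
Qed.

Lemma int_emp (g : vec R n -> R) : measurable_fun setT g ->
  (\int[empirical qs]_x (g x)%:E = ((N%:R^-1) * \sum_(i < N) g (qs i))%:E)%E.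
Proof.
move=> mg.
have mE : measurable_fun setT (fun x => (g x)%:E) by exact/measurable_EFinP.
rewrite -[X in X = _]/(\int[empirical qs]_x (fun y => (g y)%:E) x)%E.
rewrite empE integralE !int_emp_ge0 //; try (exact: measurable_funepos);
  try (exact: measurable_funeneg); try (by move=> x; exact: funepos_ge0);
  try (by move=> x; exact: funeneg_ge0).
under eq_bigr do rewrite funeposE -EFin_max.
under [X in (_ - _ * X)%E]eq_bigr do rewrite funenegE -EFinN -EFin_max.
rewrite !sumEFin -!EFinM -EFinB -mulrBr -sumrB.
by under eq_bigr do rewrite maxr_sub.
Qed.

Lemma emp_P1 : (0 < N)%N -> is_P1 (empirical qs).
Proof.
move=> N0; split.
- by rewrite empE /empm measure0.
- by move=> A mA; rewrite empE /empm measure_ge0.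
- by rewrite empE /empm; exact: measure_semi_sigma_additive.
- rewrite /empirical; under eq_bigr do rewrite diracT.
  rewrite sumEFin sumr_const card_ord -EFinM mulVf //.
  by rewrite pnatr_eq0 -lt0n.
- rewrite (int_emp (fun q : vec R n => mx_norm (q : 'cV[R]_n))).
    exact: ltry.
  apply: meas_cont; exact: norm_continuous.
Qed.

Lemma int_emp_cst (c : R) : (0 < N)%N ->
  fine (\int[empirical qs]_x c%:E)%E = c.
Proof.
move=> N0.
rewrite (int_emp (fun _ : vec R n => c)); last exact: measurable_cst.
rewrite /= sumr_const card_ord -[c *+ N]mulr_natl mulrA mulVf ?mul1r //.
by rewrite pnatr_eq0 -lt0n.
Qed.

End emp.



Lemma mulmx_colE (R : realType) m n (A : 'M[R]_(m, n)) (x : 'cV[R]_n) :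
  A *m x = \sum_(k < n) x k 0 *: col k A.
Proof.
apply/matrixP => i j; rewrite mxE summxE; apply: eq_bigr => k _.
by rewrite !mxE (ord1 j) mulrC.
Qed.

Lemma cvg_mulmx (R : realType) m n T (F : set_system T) {FF : Filter F}
  (A : 'M[R]_(m, n)) (f : T -> 'cV[R]_n) l :
  f @ F --> l -> (fun t => A *m f t) @ F --> A *m l.
Proof.
move=> H.
rewrite mulmx_colE; under eq_cvg do rewrite mulmx_colE.
have hc : continuous (fun x : 'cV[R]_m * 'cV[R]_m => x.1 + x.2).
  exact: add_continuous.
apply: (@cvg_big 'cV[R]_m 'I_n +%R 0 xpredT hc T F (index_enum _)
   (fun k t => f t k 0 *: col k A) (fun k => l k 0 *: col k A) FF).
move=> k _; apply: cvgZ; last exact: cvg_cst.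
exact: (cvg_comp _ _ H (@coord_continuous R n 1 k 0 l)).
Qed.

Lemma zmod_id (V : zmodType) (a b c d : V) : (a - b) - (c - d) = (a - c) - (b - d).
Proof. by rewrite !opprB addrACA [RHS]addrACA (addrC (- b)). Qed.
Lemma zmod_id2 (V : zmodType) (q x y z : V) : (q - (x - z)) - (q - (y - z)) = - (x - y).
Proof. by rewrite zmod_id subrr sub0r zmod_id subrr subr0. Qed.

Theorem lemma1 (R : realType) (nr nq N : nat)
  (hnr : (0 < nr)%N) (hnq : (0 < nq)%N) (hN : (0 < N)%N)
  (Mr : 'M[R]_nr) (Mq : 'M[R]_nq) (Gr : 'M[R]_(nq, nr))
  (hMr_sym : Mr^T = Mr)
  (hMr_pd : forall v : 'cV[R]_nr, v != 0 -> 0 < (v^T *m Mr *m v) 0 0)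
  (hMq_sym : Mq^T = Mq)
  (hMq_pd : forall v : 'cV[R]_nq, v != 0 -> 0 < (v^T *m Mq *m v) 0 0)
  (gr gq : R) (hgr : 0 < gr) (hgq : 0 < gq)
  (rin sin : 'cV[R]_nr) (qin : 'I_N -> 'cV[R]_nq)
  (r s a : R -> 'cV[R]_nr) (Q : 'I_N -> R -> 'cV[R]_nq)
  (hr : deriv_on_nonneg r s) (hs : deriv_on_nonneg s a)
  (hQ : forall j, deriv_on_nonneg (Q j) (fun t => - (Gr *m s t)))
  (hode : forall t, 0 <= t ->
     (Mr + \sum_(i < N) Gr^T *m Mq *m Gr) *m a t
     = - (gr%:M *m r t) + \sum_(i < N) Gr^T *m gq%:M *m Q i t)
  (hr0 : r 0 = rin) (hs0 : s 0 = sin) (hQ0 : forall j, Q j 0 = qin j) :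
  lpk_solution Mr Mq Gr gr%:M gq%:M N%:R rin sin (empirical qin) r
    (fun t => empirical (fun j => Q j t)).

Proof.
have N0 : (N%:R : R) != 0 by rewrite pnatr_eq0 -lt0n.
split; first exact: emp_P1.
pose Qf := fun (t : R) (q : vec R nq) => ((q : 'cV[R]_nq) - Gr *m (r t - r 0) : vec R nq).
exists s, a, Qf.
have dQf : forall q : 'cV[R]_nq,
    deriv_on_nonneg (fun t => q - Gr *m (r t - r 0)) (fun t => - (Gr *m s t)).
  move=> q u u0.
  have FW : Filter (within (fun h : R => 0 <= u + h) (0:R)^').
    by apply: within_filter; exact: dnbhs_filter.
  have H := @cvgN _ _ _ _ FW _ _ (@cvg_mulmx R _ _ _ _ FW Gr _ _ (hr u u0)).
  apply: (cvg_trans _ H); apply: near_eq_cvg; apply: nearW => h /=.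
  by rewrite !mulmxBr zmod_id2 scalerN -mulmxBr scalemxAr.
have HQ : forall j t, 0 <= t -> Q j t = Qf t (qin j).
  move=> j t t0.
  have Hd : deriv_on_nonneg (fun t => Q j t - (qin j - Gr *m (r t - r 0))) (fun _ => 0).
    move=> u u0.
    have FW : Filter (within (fun h : R => 0 <= u + h) (0:R)^').
      by apply: within_filter; exact: dnbhs_filter.
    have H := @cvgB _ _ _ _ FW _ _ _ _ (hQ j u u0) (dQf (qin j) u u0).
    rewrite subrr in H.
    apply: (cvg_trans _ H); apply: near_eq_cvg; apply: nearW => h /=.
    by rewrite zmod_id scalerBr.
  have := @zero_deriv_mx R _ _ _ Hd t t0.
  rewrite subrr mulmx0 subr0 hQ0 subrr => /eqP; rewrite subr_eq0 => /eqP.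
  by [].
split.
- by split.
- by split.
- move=> t t0.
  have I1 : forall C : 'M[R]_nr,
      mx_integral (empirical (fun j => Q j t)) (fun _ => C) = C.
    move=> C; apply/matrixP => i k; rewrite mxE.
    by rewrite int_emp_cst.
  have I2 : mx_integral (empirical (fun j => Q j t)) (fun q => (q : 'cV[R]_nq))
            = N%:R^-1 *: \sum_(j < N) Q j t.
    apply/matrixP => i k; rewrite !mxE.
    rewrite (@int_emp R nq N (fun j => Q j t) (fun q : vec R nq => (q : 'cV[R]_nq) i k)) /=; last first.
      apply: (@meas_cont R nq (fun q : 'cV[R]_nq => q i k)); exact: coord_continuous.
    by rewrite summxE.
  rewrite I1 I2 -scalemxAr scalerA mulfV // scale1r mulmx_sumr.
  have -> : N%:R *: (Gr^T *m Mq *m Gr) = \sum_(i < N) Gr^T *m Mq *m Gr.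
    by rewrite sumr_const card_ord scaler_nat.
  exact: hode.
- move=> q; split; first exact: dQf.
  by rewrite /Qf subrr mulmx0 subr0.
- move=> t t0; apply/funext => A.
  rewrite /pushforward /empirical; congr (_ * _)%E; apply: eq_bigr => j _.
  by rewrite !diracE HQ.
Qed.
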